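(* There is a computable coloring $c:\mathcal{P}_{fin}(\mathbb{N})\rightarrow\{0,1\}$ such that for every computably enumerable $\mathcal{S}\subseteq\mathcal{P}_{fin}(\mathbb{N})$ which contains infinitely many pairwise disjoint elements, $c$ is not constant on $NU(\mathcal{S})$.
   Context: $\mathcal{P}_{fin}(\mathbb{N})$ is the set of finite subsets of $\mathbb{N}$, identified with $\mathbb{N}$ via a fixed computable bijection (e.g. a finite set corresponds to the number whose binary expansion has 1s exactly at its elements); computability and computable enumerability of subsets of and functions on $\mathcal{P}_{fin}(\mathbb{N})$ are with respect to this identification. For $\mathcal{S}\subseteq\mathcal{P}_{fin}(\mathbb{N})$, $NU(\mathcal{S})$ denotes the set of non-empty sets which are unions of finitely many elements of $\mathcal{S}$. *)

(* Defs.v *)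
(* Computability is formalised via Kleene's partial recursive
   functions (mu-recursive codes with a big-step evaluation relation). *)
From Stdlib Require Import Arith List.
Import ListNotations.

Inductive code : Type :=
| Zero : code
| Succ : code
| Proj : nat -> code
| Comp : code -> list code -> code
| Prec : code -> code -> code
| Mu   : code -> code.

Inductive eval : code -> list nat -> nat -> Prop :=
| eZero v : eval Zero v 0
| eSucc v : eval Succ v (S (hd 0 v))
| eProj i v : eval (Proj i) v (nth i v 0)
| eComp f gs v ws y : evals gs v ws -> eval f ws y -> eval (Comp f gs) v y
| ePrec0 f g v y : eval f v y -> eval (Prec f g) (0 :: v) y
| ePrecS f g n v r y :
    eval (Prec f g) (n :: v) r -> eval g (n :: r :: v) y ->
    eval (Prec f g) (S n :: v) y
| eMu f v n :
    eval f (n :: v) 0 ->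
    (forall m, m < n -> exists k, eval f (m :: v) (S k)) ->
    eval (Mu f) v n
with evals : list code -> list nat -> list nat -> Prop :=
| esNil v : evals [] v []
| esCons g gs v y ys : eval g v y -> evals gs v ys -> evals (g :: gs) v (y :: ys).

(** Finite subsets of N are identified with naturals via binary expansion:
    the set coded by [a] is { k | Nat.testbit a k = true }. *)
Definition fin_mem (k a : nat) : Prop := Nat.testbit a k = true.

Definition fin_disjoint (a b : nat) : Prop := forall k, ~ (fin_mem k a /\ fin_mem k b).

(** Union of finite sets = bitwise or of codes; empty set = 0. *)
Definition fin_union_list (l : list nat) : nat := fold_right Nat.lor 0 l.

Definition computable_coloring (c : nat -> bool) : Prop :=
  exists e : code, forall n, eval e [n] (if c n then 1 else 0).

Definition c_e (S : nat -> Prop) : Prop :=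
  exists e : code, forall n, S n <-> exists y, eval e [n] y.

Definition inf_pairwise_disjoint (S : nat -> Prop) : Prop :=
  exists f : nat -> nat,
    (forall i, S (f i)) /\
    (forall i j, i <> j -> f i <> f j) /\
    (forall i j, i <> j -> fin_disjoint (f i) (f j)).

Definition NU (S : nat -> Prop) (a : nat) : Prop :=
  a <> 0 /\ exists l : list nat, (forall x, In x l -> S x) /\ a = fin_union_list l.

(* Main.v *)
Require Import Defs.
From Stdlib Require Import Arith List Lia Bool Morphisms Setoid Classical ClassicalEpsilon.
Import ListNotations.


Fixpoint precR (F : list nat -> nat) (G : nat -> nat -> list nat -> nat) n v :=
  match n with 0 => F v | S n => G n (precR F G n v) v end.

Lemma eval_prec f g F G :
  (forall v, eval f v (F v)) -> (forall i r v, eval g (i::r::v) (G i r v)) ->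
  forall n v, eval (Prec f g) (n::v) (precR F G n v).
Proof.
  intros Hf Hg n v; induction n; simpl.
  - constructor; auto.
  - eapply ePrecS; eauto.
Qed.

Lemma evals1 g v a : eval g v a -> evals [g] v [a].
Proof. intros; repeat constructor; auto. Qed.
Lemma evals2 g1 g2 v a b : eval g1 v a -> eval g2 v b -> evals [g1;g2] v [a;b].
Proof. intros; repeat constructor; auto. Qed.
Lemma evals3 g1 g2 g3 v a b c : eval g1 v a -> eval g2 v b -> eval g3 v c -> evals [g1;g2;g3] v [a;b;c].
Proof. intros; repeat constructor; auto. Qed.

Lemma eProj' i v y : y = nth i v 0 -> eval (Proj i) v y.
Proof. intros ->; constructor. Qed.

Definition c_add := Prec (Proj 0) (Comp Succ [Proj 1]).
Lemma ev_add a b : eval c_add [a;b] (a+b).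
Proof.
  replace (a+b) with (precR (fun v => nth 0 v 0) (fun i r v => S r) a [b]).
  - apply eval_prec; intros. constructor. econstructor. apply evals1; constructor. constructor.
  - induction a; simpl; auto.
Qed.

Definition c_mul := Prec Zero (Comp c_add [Proj 1; Proj 2]).
Lemma ev_mul a b : eval c_mul [a;b] (a*b).
Proof.
  replace (a*b) with (precR (fun v => 0) (fun i r v => r + nth 0 v 0) a [b]).
  - apply eval_prec; intros. constructor. econstructor. apply evals2; constructor. apply ev_add.
  - induction a; simpl; auto. rewrite IHa; lia.
Qed.

(* subrev [b; a] = a - b *)
Definition c_subrev := Prec (Proj 0) (Comp (Prec Zero (Proj 0)) [Proj 1]).
Lemma ev_pred n : eval (Prec Zero (Proj 0)) [n] (pred n).
Proof.
  replace (pred n) with (precR (fun v => 0) (fun i r v => i) n []).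
  - apply eval_prec; intros; constructor.
  - destruct n; reflexivity.
Qed.
Definition c_sub := Comp c_subrev [Proj 1; Proj 0].
Lemma ev_sub a b : eval c_sub [a;b] (a-b).
Proof.
  econstructor. apply evals2; constructor.
  replace (a-b) with (precR (fun v => nth 0 v 0) (fun i r v => pred r) b [a]).
  - apply eval_prec; intros. constructor. econstructor. apply evals1; constructor. apply ev_pred.
  - induction b; simpl. lia. rewrite IHb; lia.
Qed.

Lemma ev_comp2 f g1 g2 v a b y : eval g1 v a -> eval g2 v b -> eval f [a;b] y -> eval (Comp f [g1;g2]) v y.
Proof. intros; econstructor; [apply evals2|]; eauto. Qed.
Lemma ev_comp1 f g1 v a y : eval g1 v a -> eval f [a] y -> eval (Comp f [g1]) v y.
Proof. intros; econstructor; [apply evals1|]; eauto. Qed.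
Lemma ev_comp3 f g1 g2 g3 v a b c y : eval g1 v a -> eval g2 v b -> eval g3 v c -> eval f [a;b;c] y -> eval (Comp f [g1;g2;g3]) v y.
Proof. intros; econstructor; [apply evals3|]; eauto. Qed.
Lemma ev_proj i v : eval (Proj i) v (nth i v 0).
Proof. constructor. Qed.

Fixpoint T w := match w with 0 => 0 | S w => T w + S w end.
Definition c_T := Prec Zero (Comp c_add [Proj 1; Comp Succ [Proj 0]]).
Lemma ev_T w : eval c_T [w] (T w).
Proof.
  replace (T w) with (precR (fun v => 0) (fun i r v => r + S i) w []).
  - apply eval_prec; intros. constructor.
    eapply ev_comp2. apply ev_proj. eapply ev_comp1. apply ev_proj. constructor. apply ev_add.
  - induction w; simpl; auto.
Qed.

Definition pr a b := b + T (a + b).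
Definition c_pr := Comp c_add [Proj 1; Comp c_T [Comp c_add [Proj 0; Proj 1]]].
Lemma ev_pr a b : eval c_pr [a;b] (pr a b).
Proof.
  eapply ev_comp2. apply ev_proj. eapply ev_comp1. eapply ev_comp2; try apply ev_proj. apply ev_add.
  apply ev_T. apply ev_add.
Qed.

Definition c_le := Comp c_sub [Comp Succ [Zero]; c_sub].
Lemma ev_le x y : eval c_le [x;y] (1 - (x - y)).
Proof.
  eapply ev_comp2. eapply ev_comp1. constructor. constructor. apply ev_sub. apply ev_sub.
Qed.

Fixpoint sumf n (f : nat -> nat) := match n with 0 => 0 | S n => sumf n f + f n end.
Definition wcount n := sumf n (fun i => 1 - (T (S i) - n)).
Definition c_wr := Prec Zero (Comp c_add [Proj 1; Comp c_le [Comp c_T [Comp Succ [Proj 0]]; Proj 2]]).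
Definition c_w := Comp c_wr [Proj 0; Proj 0].
Lemma ev_w n : eval c_w [n] (wcount n).
Proof.
  eapply ev_comp2; try apply ev_proj. simpl.
  replace (wcount n) with (precR (fun v => 0) (fun i r v => r + (1 - (T (S i) - nth 0 v 0))) n [n]).
  - apply eval_prec; intros. constructor.
    eapply ev_comp2. apply ev_proj. eapply ev_comp2. eapply ev_comp1. eapply ev_comp1. apply ev_proj.
    constructor. apply ev_T. apply ev_proj. apply ev_le. apply ev_add.
  - unfold wcount. generalize n at 2 4. induction n; intros; simpl; auto.
Qed.

Definition p2 n := n - T (wcount n).
Definition p1 n := wcount n - p2 n.
Definition c_p2 := Comp c_sub [Proj 0; Comp c_T [c_w]].
Lemma ev_p2 n : eval c_p2 [n] (p2 n).
Proof. eapply ev_comp2. apply ev_proj. eapply ev_comp1. apply ev_w. apply ev_T. apply ev_sub. Qed.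
Definition c_p1 := Comp c_sub [c_w; c_p2].
Lemma ev_p1 n : eval c_p1 [n] (p1 n).
Proof. eapply ev_comp2. apply ev_w. apply ev_p2. apply ev_sub. Qed.


Lemma T_mono a b : a <= b -> T a <= T b.
Proof. induction 1; simpl; lia. Qed.
Lemma T_ge w : w <= T w.
Proof. induction w; simpl; lia. Qed.

Lemma sumf_ind_min n w : sumf n (fun i => if i <? w then 1 else 0) = Nat.min n w.
Proof.
  induction n. reflexivity. cbn [sumf]. rewrite IHn. destruct (n <? w) eqn:E.
  apply Nat.ltb_lt in E; lia. apply Nat.ltb_ge in E; lia.
Qed.
Lemma sumf_ind_lt n w : w <= n -> sumf n (fun i => if i <? w then 1 else 0) = w.
Proof. intros; rewrite sumf_ind_min; lia. Qed.

Lemma sumf_ext n f g : (forall i, i < n -> f i = g i) -> sumf n f = sumf n g.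
Proof. induction n; simpl; intros; auto. rewrite IHn, H; auto. Qed.

Lemma wcount_spec n w : T w <= n < T (S w) -> wcount n = w.
Proof.
  intros [H1 H2]. unfold wcount.
  rewrite (sumf_ext n _ (fun i => if i <? w then 1 else 0)).
  - apply sumf_ind_lt. pose proof (T_ge w). lia.
  - intros i Hi. destruct (i <? w) eqn:E.
    + apply Nat.ltb_lt in E. assert (T (S i) <= T w) by (apply T_mono; lia). lia.
    + apply Nat.ltb_ge in E. assert (T (S w) <= T (S i)) by (apply T_mono; lia). lia.
Qed.

Lemma w_exists n : exists w, T w <= n < T (S w).
Proof.
  induction n.
  - exists 0; simpl; lia.
  - destruct IHn as [w Hw]. destruct (Nat.eq_dec (S n) (T (S w))).
    + exists (S w). simpl in *. lia.
    + exists w. lia.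
Qed.

Lemma p1_pr a b : p1 (pr a b) = a.
Proof.
  unfold p1, p2, pr. rewrite (wcount_spec _ (a+b)). lia. simpl; lia.
Qed.
Lemma p2_pr a b : p2 (pr a b) = b.
Proof.
  unfold p2, pr. rewrite (wcount_spec _ (a+b)). lia. simpl; lia.
Qed.
Lemma pr_p n : pr (p1 n) (p2 n) = n.
Proof.
  destruct (w_exists n) as [w Hw]. unfold p1, p2, pr.
  rewrite (wcount_spec _ w Hw). simpl in Hw.
  replace (w - (n - T w) + (n - T w)) with w by lia. lia.
Qed.
Lemma pr_ge2 a b : b <= pr a b.
Proof. unfold pr; lia. Qed.
Lemma pr_ge1 a b : a <= pr a b.
Proof. unfold pr. pose proof (T_ge (a+b)). lia. Qed.
Lemma p2_le n : p2 n <= n.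
Proof. unfold p2; lia. Qed.
Lemma p1_le n : p1 n <= n.
Proof. rewrite <- (pr_p n) at 2. apply pr_ge1. Qed.


Fixpoint recf n b (s : nat -> nat -> nat) := match n with 0 => b | S n => s n (recf n b s) end.

Lemma eval_precf f g v F G :
  eval f v F -> (forall i r, eval g (i::r::v) (G i r)) ->
  forall n, eval (Prec f g) (n::v) (recf n F G).
Proof.
  intros Hf Hg n; induction n; simpl.
  - constructor; auto.
  - eapply ePrecS; eauto.
Qed.

Fixpoint encl (l : list nat) := match l with [] => 0 | x :: l => S (pr x (encl l)) end.
Definition hdl n := p1 (pred n).
Definition tll n := p2 (pred n).
Definition consl x l := S (pr x l).
Lemma hdl_cons x l : hdl (consl x l) = x.
Proof. unfold hdl, consl; simpl; apply p1_pr. Qed.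
Lemma tll_cons x l : tll (consl x l) = l.
Proof. unfold tll, consl; simpl; apply p2_pr. Qed.
Lemma p1_0 : p1 0 = 0.
Proof. pose proof (p1_le 0); lia. Qed.
Lemma p2_0 : p2 0 = 0.
Proof. pose proof (p2_le 0); lia. Qed.
Lemma hdl_0 : hdl 0 = 0.
Proof. apply p1_0. Qed.
Lemma tll_0 : tll 0 = 0.
Proof. apply p2_0. Qed.

Lemma iter_tll_0 i : Nat.iter i tll 0 = 0.
Proof. induction i; simpl; auto. rewrite IHi; apply tll_0. Qed.

Lemma nth_encl i env : nth i env 0 = hdl (Nat.iter i tll (encl env)).
Proof.
  revert env; induction i; intros [|x env].
  - simpl; now rewrite hdl_0.
  - simpl; symmetry; apply (hdl_cons x (encl env)).
  - simpl nth. rewrite iter_tll_0; now rewrite hdl_0.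
  - simpl nth. rewrite IHi. f_equal. rewrite Nat.iter_succ_r. f_equal. symmetry; apply (tll_cons x (encl env)).
Qed.

Definition c_pred := Prec Zero (Proj 0).
Definition c_hd := Comp c_p1 [Comp c_pred [Proj 0]].
Definition c_tl := Comp c_p2 [Comp c_pred [Proj 0]].
Definition c_cons := Comp Succ [c_pr].
Lemma ev_hd n : eval c_hd [n] (hdl n).
Proof. eapply ev_comp1. eapply ev_comp1. apply ev_proj. apply ev_pred. apply ev_p1. Qed.
Lemma ev_tl n : eval c_tl [n] (tll n).
Proof. eapply ev_comp1. eapply ev_comp1. apply ev_proj. apply ev_pred. apply ev_p2. Qed.
Lemma ev_cons x l : eval c_cons [x;l] (consl x l).
Proof. eapply ev_comp1. apply ev_pr. constructor. Qed.

Inductive exp :=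
| Var (i : nat) | Cst (n : nat) | Add (a b : exp) | Mul (a b : exp) | Sub (a b : exp)
| Ite (c a b : exp) | Sum (n body : exp) | Rec (n base step : exp)
| Pr (a b : exp) | P1 (a : exp) | P2 (a : exp).

Fixpoint den (E : exp) (env : list nat) : nat :=
  match E with
  | Var i => nth i env 0
  | Cst n => n
  | Add a b => den a env + den b env
  | Mul a b => den a env * den b env
  | Sub a b => den a env - den b env
  | Ite c a b => if den c env =? 0 then den b env else den a env
  | Sum n body => sumf (den n env) (fun i => den body (i :: env))
  | Rec n base step => recf (den n env) (den base env) (fun i r => den step (i :: r :: env))
  | Pr a b => pr (den a env) (den b env)
  | P1 a => p1 (den a env)
  | P2 a => p2 (den a env)
  end.

Fixpoint tlchain i := match i with 0 => Proj 0 | S i => Comp c_tl [tlchain i] end.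
Lemma ev_tlchain i n : eval (tlchain i) [n] (Nat.iter i tll n).
Proof. induction i; simpl. apply ev_proj. eapply ev_comp1. apply IHi. apply ev_tl. Qed.
Fixpoint cstc n := match n with 0 => Zero | S n => Comp Succ [cstc n] end.
Lemma ev_cst n v : eval (cstc n) v n.
Proof. induction n; simpl. constructor. eapply ev_comp1. apply IHn. constructor. Qed.
Definition c_ite := Prec (Proj 1) (Proj 2).
Lemma ev_ite x y z : eval c_ite [x;y;z] (if x =? 0 then z else y).
Proof. destruct x; unfold c_ite; simpl. apply ePrec0; constructor. eapply ePrecS. eapply eval_precf with (G := fun i r => y). apply ev_proj. intros; apply ev_proj. apply ev_proj. Qed.

Lemma compile E : exists c, forall env, eval c [encl env] (den E env).
Proof.
  induction E; simpl.
  - exists (Comp c_hd [tlchain i]). intros. rewrite nth_encl. eapply ev_comp1. apply ev_tlchain. apply ev_hd.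
  - exists (cstc n). intros; apply ev_cst.
  - destruct IHE1 as [c1 H1], IHE2 as [c2 H2]. exists (Comp c_add [c1;c2]). intros; eapply ev_comp2; eauto. apply ev_add.
  - destruct IHE1 as [c1 H1], IHE2 as [c2 H2]. exists (Comp c_mul [c1;c2]). intros; eapply ev_comp2; eauto. apply ev_mul.
  - destruct IHE1 as [c1 H1], IHE2 as [c2 H2]. exists (Comp c_sub [c1;c2]). intros; eapply ev_comp2; eauto. apply ev_sub.
  - destruct IHE1 as [c1 H1], IHE2 as [c2 H2], IHE3 as [c3 H3]. exists (Comp c_ite [c1;c2;c3]).
    intros; eapply ev_comp3; eauto. apply ev_ite.
  - destruct IHE1 as [c1 H1], IHE2 as [c2 H2].
    exists (Comp (Prec Zero (Comp c_add [Proj 1; Comp c2 [Comp c_cons [Proj 0; Proj 2]]])) [c1; Proj 0]).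
    intros. eapply ev_comp2. apply H1. apply ev_proj. simpl.
    replace (sumf _ _) with (recf (den E1 env) 0 (fun i r => r + den E2 (i :: env))).
    + apply eval_precf. constructor. intros. eapply ev_comp2. apply ev_proj.
      eapply ev_comp1. eapply ev_comp2; try apply ev_proj. apply ev_cons. apply (H2 (i :: env)). apply ev_add.
    + generalize (den E1 env); induction n; simpl; auto.
  - destruct IHE1 as [c1 H1], IHE2 as [c2 H2], IHE3 as [c3 H3].
    exists (Comp (Prec c2 (Comp c3 [Comp c_cons [Proj 0; Comp c_cons [Proj 1; Proj 2]]])) [c1; Proj 0]).
    intros. eapply ev_comp2. apply H1. apply ev_proj. simpl.
    apply eval_precf. apply H2. intros. eapply ev_comp1. eapply ev_comp2. apply ev_proj.
    eapply ev_comp2; try apply ev_proj. apply ev_cons. apply ev_cons. apply (H3 (i :: r :: env)).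
  - destruct IHE1 as [c1 H1], IHE2 as [c2 H2]. exists (Comp c_pr [c1;c2]). intros; eapply ev_comp2; eauto. apply ev_pr.
  - destruct IHE as [c1 H1]. exists (Comp c_p1 [c1]). intros; eapply ev_comp1; eauto. apply ev_p1.
  - destruct IHE as [c1 H1]. exists (Comp c_p2 [c1]). intros; eapply ev_comp1; eauto. apply ev_p2.
Qed.


Fixpoint liftE (k : nat) (E : exp) : exp :=
  match E with
  | Var i => Var (if i <? k then i else S i)
  | Cst n => Cst n
  | Add a b => Add (liftE k a) (liftE k b)
  | Mul a b => Mul (liftE k a) (liftE k b)
  | Sub a b => Sub (liftE k a) (liftE k b)
  | Ite c a b => Ite (liftE k c) (liftE k a) (liftE k b)
  | Sum n body => Sum (liftE k n) (liftE (S k) body)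
  | Rec n base step => Rec (liftE k n) (liftE k base) (liftE (S (S k)) step)
  | Pr a b => Pr (liftE k a) (liftE k b)
  | P1 a => P1 (liftE k a)
  | P2 a => P2 (liftE k a)
  end.

Fixpoint ins k x (env : list nat) :=
  match k with
  | 0 => x :: env
  | S k => match env with [] => 0 :: ins k x [] | y :: env => y :: ins k x env end
  end.

Lemma nth_ins k x env i : nth (if i <? k then i else S i) (ins k x env) 0 = nth i env 0.
Proof.
  revert env i; induction k; intros env i; simpl.
  - destruct (i <? 0) eqn:E; [apply Nat.ltb_lt in E; lia|]. reflexivity.
  - destruct env as [|y env]; destruct i as [|i]; simpl; auto.
    + specialize (IHk [] i). change (S i <? S k) with (i <? k). destruct (i <? k); simpl in *; rewrite IHk; destruct i; auto.
    + specialize (IHk env i). change (S i <? S k) with (i <? k). destruct (i <? k); simpl in *; auto.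
Qed.

Lemma sumf_ext' n f g : (forall i, f i = g i) -> sumf n f = sumf n g.
Proof. intros; apply sumf_ext; auto. Qed.
Lemma recf_ext n b s1 s2 : (forall i r, s1 i r = s2 i r) -> recf n b s1 = recf n b s2.
Proof. intros H; induction n; simpl; auto. rewrite IHn; auto. Qed.

Lemma den_liftE E : forall k x env, den (liftE k E) (ins k x env) = den E env.
Proof.
  induction E; intros; simpl; try rewrite IHE1; try rewrite IHE2; try rewrite IHE3; try rewrite IHE; auto.
  - apply nth_ins.
  - apply sumf_ext'; intros. apply (IHE2 (S k) x (i :: env)).
  - apply recf_ext; intros. apply (IHE3 (S (S k)) x (i :: r :: env)).
Qed.

Definition lift0 E := liftE 0 E.
Lemma den_lift0 E x env : den (lift0 E) (x :: env) = den E env.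
Proof. apply (den_liftE E 0 x env). Qed.

Definition nz n := negb (n =? 0).
Fixpoint bex n (p : nat -> bool) := match n with 0 => false | S n => bex n p || p n end.
Definition ball n (p : nat -> bool) := negb (bex n (fun i => negb (p i))).

Lemma bex_ext n p q : (forall i, i < n -> p i = q i) -> bex n p = bex n q.
Proof. induction n; simpl; intros; auto. rewrite IHn, H; auto. Qed.
#[export] Instance bex_proper : Proper (eq ==> pointwise_relation nat eq ==> eq) bex.
Proof. intros n m -> p q H. apply bex_ext; auto. Qed.
#[export] Instance ball_proper : Proper (eq ==> pointwise_relation nat eq ==> eq) ball.
Proof. intros n m -> p q H. unfold ball. f_equal. apply bex_ext; intros; rewrite H; auto. Qed.

Lemma bex_spec n p : bex n p = true <-> exists i, i < n /\ p i = true.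
Proof.
  induction n; simpl. split; [discriminate| intros [i [H _]]; lia].
  rewrite orb_true_iff, IHn. split.
  - intros [[i [H1 H2]]|H]; [exists i; split; auto; lia | exists n; auto].
  - intros [i [H1 H2]]. destruct (Nat.eq_dec i n). subst; auto. left; exists i; split; auto; lia.
Qed.
Lemma ball_spec n p : ball n p = true <-> forall i, i < n -> p i = true.
Proof.
  unfold ball. rewrite negb_true_iff. split.
  - intros H i Hi. destruct (p i) eqn:E; auto. exfalso.
    assert (bex n (fun i => negb (p i)) = true) by (apply bex_spec; exists i; rewrite E; auto). congruence.
  - intros H. destruct (bex _ _) eqn:E; auto. apply bex_spec in E. destruct E as [i [H1 H2]].
    rewrite H in H2; auto; discriminate.
Qed.

Lemma nz_add a b : nz (a + b) = nz a || nz b.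
Proof. unfold nz; destruct a, b; simpl; auto. Qed.
Lemma nz_sumf n f : nz (sumf n f) = bex n (fun i => nz (f i)).
Proof. induction n; simpl; auto. rewrite nz_add, IHn; auto. Qed.
Lemma nz_b2n b : nz (Nat.b2n b) = b.
Proof. destruct b; reflexivity. Qed.

Definition nzE a := Ite a (Cst 1) (Cst 0).
Definition notE a := Ite a (Cst 0) (Cst 1).
Definition andE a b := Ite a (nzE b) (Cst 0).
Definition orE a b := Ite a (Cst 1) (nzE b).
Definition leE a b := notE (Sub a b).
Definition ltE a b := leE (Add a (Cst 1)) b.
Definition eqE a b := andE (leE a b) (leE b a).
Definition exE N body := nzE (Sum N body).
Definition allE N body := notE (exE N (notE body)).

Lemma den_nzE a env : den (nzE a) env = Nat.b2n (nz (den a env)).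
Proof. unfold nzE, nz; simpl; destruct (den a env =? 0); auto. Qed.
Lemma den_notE a env : den (notE a) env = Nat.b2n (negb (nz (den a env))).
Proof. unfold notE, nz; simpl; destruct (den a env =? 0); auto. Qed.
Lemma den_andE a b env : den (andE a b) env = Nat.b2n (nz (den a env) && nz (den b env)).
Proof. unfold andE; cbn [den]. rewrite den_nzE. unfold nz. destruct (den a env =? 0); reflexivity. Qed.
Lemma den_orE a b env : den (orE a b) env = Nat.b2n (nz (den a env) || nz (den b env)).
Proof. unfold orE; cbn [den]. rewrite den_nzE. unfold nz. destruct (den a env =? 0); reflexivity. Qed.
Lemma den_leE a b env : den (leE a b) env = Nat.b2n (den a env <=? den b env).
Proof.
  unfold leE. rewrite den_notE. simpl. unfold nz. destruct (den a env <=? den b env) eqn:E.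
  apply Nat.leb_le in E. replace (den a env - den b env) with 0 by lia. auto.
  apply Nat.leb_gt in E. destruct (den a env - den b env) eqn:E2; [lia|auto].
Qed.
Lemma den_ltE a b env : den (ltE a b) env = Nat.b2n (den a env <? den b env).
Proof. unfold ltE. rewrite den_leE. simpl. rewrite Nat.add_1_r. reflexivity. Qed.
Lemma den_eqE a b env : den (eqE a b) env = Nat.b2n (den a env =? den b env).
Proof.
  unfold eqE. rewrite den_andE, !den_leE, !nz_b2n.
  destruct (den a env =? den b env) eqn:E.
  apply Nat.eqb_eq in E; rewrite E, Nat.leb_refl; auto.
  apply Nat.eqb_neq in E. destruct (den a env <=? den b env) eqn:E1, (den b env <=? den a env) eqn:E2; auto.
  apply Nat.leb_le in E1, E2; lia.
Qed.
Lemma den_exE N body env : den (exE N body) env = Nat.b2n (bex (den N env) (fun i => nz (den body (i :: env)))).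
Proof. unfold exE. rewrite den_nzE. simpl. rewrite nz_sumf. reflexivity. Qed.
Lemma den_allE N body env : den (allE N body) env = Nat.b2n (ball (den N env) (fun i => nz (den body (i :: env)))).
Proof.
  unfold allE. rewrite den_notE, den_exE, nz_b2n. unfold ball. f_equal. f_equal.
  apply bex_ext; intros. rewrite den_notE, nz_b2n. reflexivity.
Qed.

Definition powE a b := Rec b (Cst 1) (Mul (Var 1) (lift0 (lift0 a))).
Lemma den_powE a b env : den (powE a b) env = den a env ^ den b env.
Proof.
  unfold powE; simpl. induction (den b env); simpl; auto.
  rewrite IHn, !den_lift0. lia.
Qed.
Definition divE a d := Sum a (leE (Mul (Add (Var 0) (Cst 1)) (lift0 d)) (lift0 a)).
Lemma den_divE a d env : den d env <> 0 -> den (divE a d) env = den a env / den d env.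
Proof.
  intros Hd. unfold divE; cbn [den].
  rewrite (sumf_ext _ _ (fun i => if i <? den a env / den d env then 1 else 0)).
  - apply sumf_ind_lt. apply Nat.Div0.div_le_upper_bound. nia.
  - intros i Hi. rewrite den_leE. cbn [den]. rewrite !den_lift0.
    destruct (i <? den a env / den d env) eqn:E.
    + apply Nat.ltb_lt in E. simpl nth. replace ((i + 1) * den d env <=? den a env) with true; [reflexivity|symmetry]; apply Nat.leb_le.
      pose proof (Nat.Div0.mul_div_le (den a env) (den d env)). nia.
    + apply Nat.ltb_ge in E. simpl nth. replace ((i + 1) * den d env <=? den a env) with false; [reflexivity|symmetry]; apply Nat.leb_gt.
      destruct (le_lt_dec ((i+1) * den d env) (den a env)); auto.
      assert (i + 1 <= den a env / den d env) by (apply Nat.div_le_lower_bound; auto; lia). lia.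
Qed.
Definition modE a d := Sub a (Mul d (divE a d)).
Lemma den_modE a d env : den d env <> 0 -> den (modE a d) env = den a env mod den d env.
Proof. intros Hd. unfold modE; cbn [den]. rewrite den_divE by auto. rewrite Nat.Div0.mod_eq. reflexivity. Qed.
Definition testbitE a j := modE (divE a (powE (Cst 2) j)) (Cst 2).
Lemma den_testbitE a j env : den (testbitE a j) env = Nat.b2n (Nat.testbit (den a env) (den j env)).
Proof.
  unfold testbitE. rewrite den_modE by (simpl; lia). rewrite den_divE.
  rewrite den_powE. simpl. symmetry; apply Nat.testbit_spec'.
  rewrite den_powE. simpl. apply Nat.pow_nonzero. lia.
Qed.

Definition hdE l := P1 (Sub l (Cst 1)).
Definition tlE l := P2 (Sub l (Cst 1)).
Definition consE x l := Add (Pr x l) (Cst 1).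
Lemma den_hdE l env : den (hdE l) env = hdl (den l env).
Proof. unfold hdE, hdl; simpl. f_equal; lia. Qed.
Lemma den_tlE l env : den (tlE l) env = tll (den l env).
Proof. unfold tlE, tll; simpl. f_equal; lia. Qed.
Lemma den_consE x l env : den (consE x l) env = consl (den x env) (den l env).
Proof. unfold consE, consl; simpl. lia. Qed.
Definition nthE i l := hdE (Rec i l (tlE (Var 1))).
Lemma den_nthE i l env : den (nthE i l) env = hdl (Nat.iter (den i env) tll (den l env)).
Proof.
  unfold nthE. rewrite den_hdE. f_equal. cbn [den]. induction (den i env); cbn [recf Nat.iter]; auto.
  rewrite den_tlE; cbn [den nth]. rewrite IHn. auto.
Qed.

Lemma den_var i env : den (Var i) env = nth i env 0. Proof. reflexivity. Qed.
Lemma den_cst n env : den (Cst n) env = n. Proof. reflexivity. Qed.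
Lemma den_add a b env : den (Add a b) env = den a env + den b env. Proof. reflexivity. Qed.
Lemma den_sub a b env : den (Sub a b) env = den a env - den b env. Proof. reflexivity. Qed.
Lemma den_mul a b env : den (Mul a b) env = den a env * den b env. Proof. reflexivity. Qed.
Lemma den_pr a b env : den (Pr a b) env = pr (den a env) (den b env). Proof. reflexivity. Qed.
Lemma den_p1 a env : den (P1 a) env = p1 (den a env). Proof. reflexivity. Qed.
Lemma den_p2 a env : den (P2 a) env = p2 (den a env). Proof. reflexivity. Qed.
Lemma den_ite c a b env : den (Ite c a b) env = if den c env =? 0 then den b env else den a env. Proof. reflexivity. Qed.

Ltac dsimp := repeat first
  [ setoid_rewrite den_lift0 | setoid_rewrite den_nzE | setoid_rewrite den_notE | setoid_rewrite den_andE
  | setoid_rewrite den_orE | setoid_rewrite den_leE | setoid_rewrite den_ltE | setoid_rewrite den_eqE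
  | setoid_rewrite den_exE | setoid_rewrite den_allE | setoid_rewrite den_testbitE
  | setoid_rewrite den_hdE | setoid_rewrite den_tlE | setoid_rewrite den_consE | setoid_rewrite den_nthE
  | setoid_rewrite den_cst | setoid_rewrite den_add | setoid_rewrite den_sub | setoid_rewrite den_mul
  | setoid_rewrite den_pr | setoid_rewrite den_p1 | setoid_rewrite den_p2 | setoid_rewrite den_ite
  | setoid_rewrite nz_b2n ].

Lemma ball_ext n p q : (forall i, i < n -> p i = q i) -> ball n p = ball n q.
Proof. intros H; unfold ball; f_equal; apply bex_ext; intros; rewrite H; auto. Qed.
Lemma den_div2E a env : den (divE a (Cst 2)) env = den a env / 2.
Proof. apply den_divE. simpl; lia. Qed.
Lemma den_mod2E a env : den (modE a (Cst 2)) env = den a env mod 2.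
Proof. apply den_modE. simpl; lia. Qed.

Ltac rs := repeat (first
  [ rewrite den_lift0 | rewrite den_nzE | rewrite den_notE | rewrite den_andE
  | rewrite den_orE | rewrite den_leE | rewrite den_ltE | rewrite den_eqE
  | rewrite den_testbitE | rewrite den_div2E | rewrite den_mod2E
  | rewrite den_hdE | rewrite den_tlE | rewrite den_consE | rewrite den_nthE
  | rewrite den_cst | rewrite den_add | rewrite den_sub | rewrite den_mul
  | rewrite den_pr | rewrite den_p1 | rewrite den_p2 | rewrite den_ite | rewrite den_var
  | rewrite nz_b2n ]); cbn [nth].
Lemma den_exE' N body env p : (forall i, i < den N env -> nz (den body (i :: env)) = p i) ->
  den (exE N body) env = Nat.b2n (bex (den N env) p).
Proof. intros H. rewrite den_exE. f_equal. apply bex_ext; auto. Qed.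
Lemma den_allE' N body env p : (forall i, i < den N env -> nz (den body (i :: env)) = p i) ->
  den (allE N body) env = Nat.b2n (ball (den N env) p).
Proof. intros H. rewrite den_allE. f_equal. apply ball_ext; auto. Qed.


Definition JE e v y := Pr (Cst 0) (Pr e (Pr v y)).
Definition JsE gs v ws := Pr (Cst 1) (Pr gs (Pr v ws)).
Definition Jn e v y := pr 0 (pr e (pr v y)).
Definition Jsn gs v ws := pr 1 (pr gs (pr v ws)).
Lemma den_JE e v y env : den (JE e v y) env = Jn (den e env) (den v env) (den y env). Proof. reflexivity. Qed.
Lemma den_JsE e v y env : den (JsE e v y) env = Jsn (den e env) (den v env) (den y env). Proof. reflexivity. Qed.

Definition c3E N B ea v y :=
  exE N (andE (testbitE (lift0 B) (JsE (lift0 (P2 ea)) (lift0 v) (Var 0)))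
              (testbitE (lift0 B) (JE (lift0 (P1 ea)) (Var 0) (lift0 y)))).
Definition c4E N B e ea v y :=
  andE (notE (eqE v (Cst 0)))
    (Ite (hdE v)
       (exE N (andE (testbitE (lift0 B) (JE (lift0 e) (consE (Sub (hdE (lift0 v)) (Cst 1)) (tlE (lift0 v))) (Var 0)))
                    (testbitE (lift0 B) (JE (lift0 (P2 ea)) (consE (Sub (hdE (lift0 v)) (Cst 1)) (consE (Var 0) (tlE (lift0 v)))) (lift0 y)))))
       (testbitE B (JE (P1 ea) (tlE v) y))).
Definition c5E N B ea v y :=
  andE (testbitE B (JE ea (consE y v) (Cst 0)))
       (allE y (exE (lift0 N) (testbitE (lift0 (lift0 B))
               (JE (lift0 (lift0 ea)) (consE (Var 1) (lift0 (lift0 v))) (Add (Var 0) (Cst 1)))))).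
Definition tag0E N B j :=
  let bd := P2 j in
  let e := P1 bd in let v := P1 (P2 bd) in let y := P2 (P2 bd) in let et := P1 e in let ea := P2 e in
  orE (andE (eqE et (Cst 0)) (eqE y (Cst 0)))
 (orE (andE (eqE et (Cst 1)) (eqE y (Add (hdE v) (Cst 1))))
 (orE (andE (eqE et (Cst 2)) (eqE y (nthE ea v)))
 (orE (andE (eqE et (Cst 3)) (c3E N B ea v y))
 (orE (andE (eqE et (Cst 4)) (c4E N B e ea v y))
      (andE (eqE et (Cst 5)) (c5E N B ea v y)))))).

Definition tag1E B j :=
  let bd := P2 j in
  let gs := P1 bd in let v := P1 (P2 bd) in let ws := P2 (P2 bd) in
  Ite gs (andE (notE (eqE ws (Cst 0))) (andE (testbitE B (JE (hdE gs) v (hdE ws))) (testbitE B (JsE (tlE gs) v (tlE ws)))))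
         (eqE ws (Cst 0)).

Definition okE N B j := Ite (P1 j) (andE (eqE (P1 j) (Cst 1)) (tag1E B j)) (tag0E N B j).

Definition tag0F N B j :=
  let bd := p2 j in
  let e := p1 bd in let v := p1 (p2 bd) in let y := p2 (p2 bd) in let et := p1 e in let ea := p2 e in
  (et =? 0) && (y =? 0)
  || (et =? 1) && (y =? hdl v + 1)
  || (et =? 2) && (y =? hdl (Nat.iter ea tll v))
  || (et =? 3) && bex N (fun ws => Nat.testbit B (Jsn (p2 ea) v ws) && Nat.testbit B (Jn (p1 ea) ws y))
  || (et =? 4) && (negb (v =? 0)
        && (if hdl v =? 0 then Nat.testbit B (Jn (p1 ea) (tll v) y)
            else bex N (fun r => Nat.testbit B (Jn e (consl (hdl v - 1) (tll v)) r)
                       && Nat.testbit B (Jn (p2 ea) (consl (hdl v - 1) (consl r (tll v))) y))))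
  || (et =? 5) && (Nat.testbit B (Jn ea (consl y v) 0)
        && ball y (fun m => bex N (fun k => Nat.testbit B (Jn ea (consl m v) (k + 1))))).

Definition tag1F B j :=
  let bd := p2 j in
  let gs := p1 bd in let v := p1 (p2 bd) in let ws := p2 (p2 bd) in
  if gs =? 0 then ws =? 0
  else negb (ws =? 0) && (Nat.testbit B (Jn (hdl gs) v (hdl ws)) && Nat.testbit B (Jsn (tll gs) v (tll ws))).

Definition okF N B j := if p1 j =? 0 then tag0F N B j else (p1 j =? 1) && tag1F B j.

Lemma den_c3E N B ea v y env : den (c3E N B ea v y) env =
  Nat.b2n (bex (den N env) (fun ws => Nat.testbit (den B env) (Jsn (p2 (den ea env)) (den v env) ws) && Nat.testbit (den B env) (Jn (p1 (den ea env)) ws (den y env)))).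
Proof.
  unfold c3E. rewrite den_exE. f_equal. apply bex_ext; intros.
  rewrite den_andE, !den_testbitE, !den_lift0, !nz_b2n, den_JE, den_JsE. cbn [den nth]. rewrite !den_lift0. reflexivity.
Qed.

Lemma den_c4E N B e ea v y env : den (c4E N B e ea v y) env =
  Nat.b2n (negb (den v env =? 0)
        && (if hdl (den v env) =? 0 then Nat.testbit (den B env) (Jn (p1 (den ea env)) (tll (den v env)) (den y env))
            else bex (den N env) (fun r => Nat.testbit (den B env) (Jn (den e env) (consl (hdl (den v env) - 1) (tll (den v env))) r)
                       && Nat.testbit (den B env) (Jn (p2 (den ea env)) (consl (hdl (den v env) - 1) (consl r (tll (den v env)))) (den y env))))).
Proof.
  unfold c4E. rs. destruct (hdl (den v env) =? 0).
  - rs. rewrite den_JE. rs. reflexivity.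
  - erewrite den_exE'. rewrite nz_b2n. reflexivity. intros. rs. rewrite !den_JE. rs. reflexivity.
Qed.

Lemma den_c5E N B ea v y env : den (c5E N B ea v y) env =
  Nat.b2n (Nat.testbit (den B env) (Jn (den ea env) (consl (den y env) (den v env)) 0)
        && ball (den y env) (fun m => bex (den N env) (fun k => Nat.testbit (den B env) (Jn (den ea env) (consl m (den v env)) (k + 1))))).
Proof.
  unfold c5E. rs. rewrite den_JE; rs. erewrite den_allE'. rewrite nz_b2n. reflexivity.
  intros. erewrite den_exE'. rewrite nz_b2n. rs. reflexivity.
  intros. rs. rewrite den_JE. rs. reflexivity.
Qed.

Lemma den_tag0E N B j env : den (tag0E N B j) env = Nat.b2n (tag0F (den N env) (den B env) (den j env)).
Proof.
  unfold tag0E, tag0F. lazy beta zeta. rs. rewrite den_c3E, den_c4E, den_c5E. rs. rewrite ?orb_assoc. reflexivity.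
Qed.
Lemma den_tag1E B j env : den (tag1E B j) env = Nat.b2n (tag1F (den B env) (den j env)).
Proof.
  unfold tag1E, tag1F. lazy beta zeta. rs. destruct (p1 (p2 (den j env)) =? 0); rs; rewrite ?den_JE, ?den_JsE; rs; reflexivity.
Qed.
Lemma den_okE N B j env : den (okE N B j) env = Nat.b2n (okF (den N env) (den B env) (den j env)).
Proof.
  unfold okE, okF. rs. destruct (p1 (den j env) =? 0). rewrite den_tag0E; reflexivity.
  rs. rewrite den_tag1E, nz_b2n. reflexivity.
Qed.


Lemma bits_lt n (p : nat -> bool) : sumf n (fun j => 2^j * Nat.b2n (p j)) < 2 ^ n.
Proof.
  induction n; simpl. lia. destruct (p n); simpl; lia.
Qed.

Lemma testbit_add_pow X n b k : X < 2 ^ n ->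
  Nat.testbit (X + 2^n * Nat.b2n b) k = if k <? n then Nat.testbit X k else (k =? n) && b.
Proof.
  intros HX.
  assert (Hk: forall a, Nat.testbit a k = Nat.odd (a / 2^k)).
  { intros a. rewrite Nat.testbit_odd, Nat.shiftr_div_pow2. reflexivity. }
  destruct (k <? n) eqn:E.
  - apply Nat.ltb_lt in E. rewrite !Hk.
    replace (2 ^ n) with (2 ^ (n - k) * 2 ^ k) by (rewrite <- Nat.pow_add_r; f_equal; lia).
    rewrite (Nat.mul_comm (2^(n-k) * 2^k)), Nat.mul_assoc, Nat.div_add by (apply Nat.pow_nonzero; lia).
    replace (n - k) with (S (n - k - 1)) by lia. rewrite Nat.pow_succ_r'.
    rewrite Nat.odd_add. replace (Nat.b2n b * (2 * 2 ^ (n - k - 1))) with (2 * (Nat.b2n b * 2 ^ (n-k-1))) by lia.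
    rewrite Nat.odd_mul, Nat.odd_2. simpl. apply Bool.xorb_false_r.
  - apply Nat.ltb_ge in E. rewrite Hk. destruct (Nat.eq_dec k n).
    + subst. rewrite Nat.eqb_refl. rewrite Nat.mul_comm, Nat.div_add by (apply Nat.pow_nonzero; lia).
      rewrite Nat.div_small by auto. destruct b; reflexivity.
    + assert (k =? n = false) by (apply Nat.eqb_neq; auto). rewrite H.
      rewrite Nat.div_small. reflexivity.
      assert (2 ^ (S n) <= 2 ^ k) by (apply Nat.pow_le_mono_r; lia). simpl in H0.
      destruct b; simpl; lia.
Qed.

Lemma bits_spec n (p : nat -> bool) k :
  Nat.testbit (sumf n (fun j => 2^j * Nat.b2n (p j))) k = (k <? n) && p k.
Proof.
  induction n; simpl.
  - apply Nat.bits_0.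
  - rewrite testbit_add_pow by apply bits_lt. rewrite IHn.
    destruct (k <? n) eqn:E.
    + apply Nat.ltb_lt in E. assert (k <? S n = true) by (apply Nat.ltb_lt; lia). rewrite H; auto.
    + apply Nat.ltb_ge in E. destruct (Nat.eq_dec k n).
      * subst. rewrite Nat.eqb_refl. assert (n <? S n = true) by (apply Nat.ltb_lt; lia). rewrite H; auto.
      * assert (k =? n = false) by (apply Nat.eqb_neq; auto). rewrite H.
        assert (k <? S n = false) by (apply Nat.ltb_ge; lia). rewrite H0; auto.
Qed.

Definition BBE s := Rec s (Cst 0) (Sum (Add (Var 0) (Cst 1))
   (Mul (powE (Cst 2) (Var 0)) (okE (Add (Var 1) (Cst 1)) (Var 2) (Var 0)))).
Definition BBf s := recf s 0 (fun i r => sumf (i+1) (fun j => 2^j * Nat.b2n (okF (i+1) r j))).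
Lemma den_BBE s env : den (BBE s) env = BBf (den s env).
Proof.
  unfold BBE, BBf. cbn [den]. apply recf_ext. intros i r. cbn [den nth].
  apply sumf_ext'. intros j. rewrite den_powE, den_okE. cbn [den nth]. reflexivity.
Qed.

Definition memB s j := Nat.testbit (BBf s) j.
Lemma memB_0 j : memB 0 j = false.
Proof. unfold memB; simpl. apply Nat.bits_0. Qed.
Lemma memB_S s j : memB (S s) j = (j <? s + 1) && okF (s+1) (BBf s) j.
Proof. unfold memB. cbn [BBf recf]. fold (BBf s). apply bits_spec. Qed.


Lemma bex_mono N N' p q : bex N p = true -> N <= N' -> (forall i, p i = true -> q i = true) -> bex N' q = true.
Proof. intros H1 H2 H3. apply bex_spec in H1 as [i [Hi Hp]]. apply bex_spec. exists i; split; auto; lia. Qed.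
Lemma ball_mono n p q : ball n p = true -> (forall i, p i = true -> q i = true) -> ball n q = true.
Proof. intros H1 H2. rewrite ball_spec in *. auto. Qed.

Lemma okF_mono N N' B B' j : okF N B j = true -> N <= N' ->
  (forall x, Nat.testbit B x = true -> Nat.testbit B' x = true) -> okF N' B' j = true.
Proof.
  intros H HN HB. unfold okF, tag0F, tag1F in *. lazy zeta in *.
  destruct (p1 j =? 0).
  - repeat rewrite orb_true_iff in *.
    destruct H as [[[[[H|H]|H]|H]|H]|H].
    + left; left; left; left; left; auto.
    + left; left; left; left; right; auto.
    + left; left; left; right; auto.
    + left; left; right. apply andb_true_iff in H as [H1 H2]. rewrite H1; simpl.
      eapply bex_mono; eauto. intros i Hi. apply andb_true_iff in Hi as [Hi1 Hi2]. rewrite HB, HB; auto.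
    + left; right. apply andb_true_iff in H as [H1 H2]. rewrite H1; simpl.
      apply andb_true_iff in H2 as [H2 H3]. rewrite H2; simpl.
      destruct (hdl _ =? 0). auto.
      eapply bex_mono; eauto. intros i Hi. apply andb_true_iff in Hi as [Hi1 Hi2]. rewrite HB, HB; auto.
    + right. apply andb_true_iff in H as [H1 H2]. rewrite H1; simpl.
      apply andb_true_iff in H2 as [H2 H3]. rewrite HB by auto; simpl.
      eapply ball_mono. exact H3. intros i Hi. eapply bex_mono. exact Hi. exact HN. intros k Hk. apply HB; exact Hk.
  - apply andb_true_iff in H as [H1 H2]. rewrite H1; simpl.
    destruct (p1 (p2 j) =? 0). auto.
    apply andb_true_iff in H2 as [H2 H3]. rewrite H2; simpl.
    apply andb_true_iff in H3 as [H3 H4]. rewrite HB, HB; auto.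
Qed.

Lemma memB_mono s j : memB s j = true -> memB (S s) j = true.
Proof.
  revert j; induction s; intros j H.
  - rewrite memB_0 in H; discriminate.
  - rewrite memB_S in *. apply andb_true_iff in H as [H1 H2]. apply andb_true_iff; split.
    apply Nat.ltb_lt in H1; apply Nat.ltb_lt; lia.
    eapply okF_mono. exact H2. lia. intros x Hx. apply IHs. exact Hx.
Qed.
Lemma memB_mono_le s s' j : s <= s' -> memB s j = true -> memB s' j = true.
Proof. induction 1; auto. intros; apply memB_mono; auto. Qed.

Fixpoint enc (c : code) : nat :=
  match c with
  | Zero => pr 0 0 | Succ => pr 1 0 | Proj i => pr 2 i
  | Comp f gs => pr 3 (pr (enc f) ((fix encs l := match l with [] => 0 | g :: l => consl (enc g) (encs l) end) gs))
  | Prec f g => pr 4 (pr (enc f) (enc g))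
  | Mu f => pr 5 (enc f)
  end.
Fixpoint encs l := match l with [] => 0 | g :: l => consl (enc g) (encs l) end.
Lemma enc_comp f gs : enc (Comp f gs) = pr 3 (pr (enc f) (encs gs)).
Proof. reflexivity. Qed.

Lemma encl_cons x l : encl (x :: l) = consl x (encl l). Proof. reflexivity. Qed.
Lemma encl_surj n : exists l, encl l = n.
Proof.
  induction n as [n IH] using (well_founded_induction lt_wf).
  destruct n. exists []; auto.
  destruct (IH (p2 n)) as [l Hl]. pose proof (p2_le n); lia.
  exists (p1 n :: l). simpl. rewrite Hl, pr_p. auto.
Qed.

Ltac prs := repeat (rewrite ?p1_pr, ?p2_pr in * ).

Lemma hdl_encl x l : hdl (encl (x :: l)) = x. Proof. apply hdl_cons. Qed.
Lemma tll_encl x l : tll (encl (x :: l)) = encl l. Proof. apply tll_cons. Qed.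


Ltac bsimp H := cbn [Nat.eqb] in H; rewrite ?andb_false_l, ?andb_true_l, ?orb_false_r, ?orb_false_l in H.

Lemma hdl_encl_hd v : hdl (encl v) = hd 0 v.
Proof. destruct v; simpl. apply hdl_0. apply (hdl_cons n (encl v)). Qed.

Lemma sound s : forall j, memB s j = true ->
  (forall c v y, j = Jn (enc c) (encl v) y -> eval c v y) /\
  (forall gs v ws, j = Jsn (encs gs) (encl v) (encl ws) -> evals gs v ws).
Proof.
  induction s; intros j Hj.
  - rewrite memB_0 in Hj; discriminate.
  - rewrite memB_S in Hj. apply andb_true_iff in Hj as [_ Hok].
    assert (IH1 : forall c v y, Nat.testbit (BBf s) (Jn (enc c) (encl v) y) = true -> eval c v y).
    { intros c v y H. apply (proj1 (IHs _ H)); auto. }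
    assert (IH2 : forall gs v ws, Nat.testbit (BBf s) (Jsn (encs gs) (encl v) (encl ws)) = true -> evals gs v ws).
    { intros gs v ws H. apply (proj2 (IHs _ H)); auto. }
    clear IHs. split.
    + intros c v y ->. unfold okF, Jn, tag0F in Hok. lazy zeta in Hok. prs. bsimp Hok.
      destruct c.
      * simpl enc in Hok. prs. bsimp Hok. apply Nat.eqb_eq in Hok; subst. constructor.
      * simpl enc in Hok. prs. bsimp Hok. apply Nat.eqb_eq in Hok; subst.
        rewrite hdl_encl_hd, Nat.add_1_r. constructor.
      * simpl enc in Hok. prs. bsimp Hok. apply Nat.eqb_eq in Hok; subst.
        apply eProj'. symmetry; apply nth_encl.
      * rewrite enc_comp in Hok. prs. bsimp Hok. apply bex_spec in Hok as [ws [_ Hws]].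
        apply andb_true_iff in Hws as [H1 H2]. destruct (encl_surj ws) as [wl <-].
        econstructor. apply IH2; eauto. apply IH1; eauto.
      * simpl enc in Hok. prs. bsimp Hok. apply andb_true_iff in Hok as [Hv Hok].
        destruct v as [|n v]. simpl in Hv; discriminate.
        rewrite hdl_encl, tll_encl in Hok. destruct n.
        -- cbn [Nat.eqb] in Hok. constructor. apply IH1; auto.
        -- cbn [Nat.eqb] in Hok. apply bex_spec in Hok as [r [_ Hr]].
           apply andb_true_iff in Hr as [H1 H2]. replace (S n - 1) with n in * by lia.
           eapply ePrecS. apply IH1. exact H1. apply IH1. exact H2.
      * simpl enc in Hok. prs. bsimp Hok. apply andb_true_iff in Hok as [H1 H2].
        constructor. apply IH1. exact H1.
        intros m Hm. rewrite ball_spec in H2. specialize (H2 m Hm). apply bex_spec in H2 as [k [_ Hk]].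
        exists k. rewrite <- Nat.add_1_r. apply IH1. exact Hk.
    + intros gs v ws ->. unfold okF, Jsn, tag1F in Hok. lazy zeta in Hok. prs. bsimp Hok.
      destruct gs as [|g gs].
      * simpl encs in Hok. bsimp Hok. apply Nat.eqb_eq in Hok. destruct ws; [constructor|discriminate].
      * simpl encs in Hok. unfold consl at 1 in Hok. bsimp Hok.
        apply andb_true_iff in Hok as [Hw Hok]. destruct ws as [|w ws]. simpl in Hw; discriminate.
        apply andb_true_iff in Hok as [H1 H2].
        rewrite hdl_encl, tll_encl, hdl_cons, tll_cons in *.
        constructor. apply IH1; auto. apply IH2; auto.
Qed.


Ltac bsimpg := cbn [Nat.eqb]; rewrite ?andb_false_l, ?andb_true_l, ?orb_false_r, ?orb_false_l.

Lemma mk j K : (forall s', K <= s' -> okF (s'+1) (BBf s') j = true) ->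
  exists s0, forall s, s0 <= s -> memB s j = true.
Proof.
  intros H. exists (S (max j K)). intros s Hs. destruct s. lia.
  rewrite memB_S. apply andb_true_iff; split. apply Nat.ltb_lt; lia. apply H; lia.
Qed.

Lemma fin_bound (P : nat -> nat -> Prop) n :
  (forall m B B', B <= B' -> P m B -> P m B') -> (forall m, m < n -> exists B, P m B) ->
  exists B, forall m, m < n -> P m B.
Proof.
  intros Hmono. induction n; intros H.
  - exists 0; intros; lia.
  - destruct IHn as [B1 HB1]. intros; apply H; lia.
    destruct (H n) as [B2 HB2]. lia.
    exists (max B1 B2). intros m Hm. destruct (Nat.eq_dec m n).
    subst. eapply Hmono; [|eauto]; lia.
    eapply Hmono; [|apply HB1]; lia.
Qed.

Fixpoint compl_eval c v y (H : eval c v y) {struct H} :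
  exists s0, forall s, s0 <= s -> memB s (Jn (enc c) (encl v) y) = true
with compl_evals gs v ws (H : evals gs v ws) {struct H} :
  exists s0, forall s, s0 <= s -> memB s (Jsn (encs gs) (encl v) (encl ws)) = true.
Proof.
  - destruct H.
    + apply (mk _ 0). intros s' _. unfold okF, Jn, tag0F. lazy zeta. simpl enc. prs. reflexivity.
    + apply (mk _ 0). intros s' _. unfold okF, Jn, tag0F. lazy zeta. simpl enc. prs. bsimpg.
      rewrite hdl_encl_hd, Nat.add_1_r. apply Nat.eqb_refl.
    + apply (mk _ 0). intros s' _. unfold okF, Jn, tag0F. lazy zeta. simpl enc. prs. bsimpg.
      rewrite <- nth_encl. apply Nat.eqb_refl.
    + destruct (compl_evals _ _ _ H) as [s1 H1]. destruct (compl_eval _ _ _ H0) as [s2 H2].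
      apply (mk _ (max (encl ws) (max s1 s2))). intros s' Hs'. unfold okF, Jn, tag0F. lazy zeta.
      rewrite enc_comp. prs. bsimpg. apply bex_spec. exists (encl ws). split. lia.
      apply andb_true_iff; split. apply H1; lia. apply H2; lia.
    + destruct (compl_eval _ _ _ H) as [s1 H1].
      apply (mk _ s1). intros s' Hs'. unfold okF, Jn, tag0F. lazy zeta. simpl enc. prs. bsimpg.
      rewrite hdl_encl, tll_encl. simpl. apply H1; lia.
    + destruct (compl_eval _ _ _ H) as [s1 H1]. destruct (compl_eval _ _ _ H0) as [s2 H2].
      apply (mk _ (max r (max s1 s2))). intros s' Hs'. unfold okF, Jn, tag0F. lazy zeta. simpl enc. prs. bsimpg.
      rewrite hdl_encl, tll_encl. cbn [Nat.eqb]. simpl. apply bex_spec. exists r. split. lia.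
      replace (n - 0) with n by lia.
      apply andb_true_iff; split. apply (H1 s'); lia. apply (H2 s'); lia.
    + rename H0 into Hlt. destruct (compl_eval _ _ _ H) as [s1 H1].
      assert (Hb : exists B, forall m, m < n -> exists k, k < B /\ forall s, B <= s -> memB s (Jn (enc f) (encl (m :: v)) (S k)) = true).
      { apply fin_bound.
        - intros m B B' HBB [k [Hk1 Hk2]]. exists k; split. lia. intros; apply Hk2; lia.
        - intros m Hm. destruct (Hlt m Hm) as [k Hk]. destruct (compl_eval _ _ _ Hk) as [s2 H2].
          exists (max (S k) s2). exists k. split. lia. intros; apply H2; lia. }
      destruct Hb as [B HB].
      apply (mk _ (max B s1)). intros s' Hs'. unfold okF, Jn, tag0F. lazy zeta. simpl enc. prs. bsimpg.
      apply andb_true_iff; split. apply (H1 s'); lia.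
      apply ball_spec. intros m Hm. destruct (HB m Hm) as [k [Hk1 Hk2]]. apply bex_spec. exists k.
      split. lia. rewrite Nat.add_1_r. apply (Hk2 s'). lia.
  - destruct H.
    + apply (mk _ 0). intros s' _. unfold okF, Jsn, tag1F. lazy zeta. simpl encs. prs. reflexivity.
    + destruct (compl_eval _ _ _ H) as [s1 H1]. destruct (compl_evals _ _ _ H0) as [s2 H2].
      apply (mk _ (max s1 s2)). intros s' Hs'. unfold okF, Jsn, tag1F. lazy zeta. simpl encs. prs. bsimpg.
      rewrite !encl_cons. unfold consl at 1 2. bsimpg. fold (consl (enc g) (encs gs)) (consl y (encl ys)).
      rewrite !hdl_cons, !tll_cons.
      apply andb_true_iff; split. apply (H1 s'); lia. apply (H2 s'); lia.
Qed.


Definition minE x := Sum x (allE (Add (Var 0) (Cst 1)) (notE (testbitE (lift0 (lift0 x)) (Var 0)))).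
Definition minf x := sumf x (fun k => Nat.b2n (ball (k+1) (fun j => negb (Nat.testbit x j)))).
Lemma den_minE x env : den (minE x) env = minf (den x env).
Proof.
  unfold minE, minf. cbn [den]. apply sumf_ext'. intros k. erewrite den_allE'. rs. reflexivity.
  intros j _. rs. reflexivity.
Qed.

Definition HE e x t := exE t (testbitE (BBE (lift0 t)) (JE (lift0 e) (consE (lift0 x) (Cst 0)) (Var 0))).
Definition Hf e x t := bex t (fun y => Nat.testbit (BBf t) (Jn e (consl x 0) y)).
Lemma den_HE e x t env : den (HE e x t) env = Nat.b2n (Hf (den e env) (den x env) (den t env)).
Proof.
  unfold HE, Hf. erewrite den_exE'. reflexivity. intros. rs. rewrite den_BBE, den_JE. rs. reflexivity.
Qed.

Definition memE e m t := exE t (andE (andE (nzE (Var 0)) (eqE (minE (Var 0)) (lift0 m))) (HE (lift0 e) (Var 0) (lift0 t))).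
Definition memf e m t := bex t (fun x => nz x && (minf x =? m) && Hf e x t).
Lemma den_memE e m t env : den (memE e m t) env = Nat.b2n (memf (den e env) (den m env) (den t env)).
Proof.
  unfold memE, memf. erewrite den_exE'. reflexivity. intros. rs. rewrite den_minE, den_HE. rs. reflexivity.
Qed.

Definition candE t m G k := andE (memE (divE k (Cst 2)) m t)
   (notE (exE m (andE (memE (divE (lift0 k) (Cst 2)) (Var 0) (lift0 t))
                      (eqE (testbitE (lift0 G) (Var 0)) (modE (lift0 k) (Cst 2)))))).
Definition candf t m G k := memf (k/2) m t && negb (bex m (fun m' => memf (k/2) m' t && (Nat.b2n (Nat.testbit G m') =? k mod 2))).
Lemma den_candE t m G k env : den (candE t m G k) env = Nat.b2n (candf (den t env) (den m env) (den G env) (den k env)).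
Proof.
  unfold candE, candf. rs. rewrite den_memE, den_div2E. rs. erewrite den_exE'. rs. reflexivity.
  intros. rs. rewrite den_memE, den_div2E. rs. reflexivity.
Qed.

Definition stepE t m G := exE (Add m (Cst 1)) (andE (candE (lift0 t) (lift0 m) (lift0 G) (Var 0))
   (andE (allE (Var 0) (notE (candE (lift0 (lift0 t)) (lift0 (lift0 m)) (lift0 (lift0 G)) (Var 0))))
         (eqE (modE (Var 0) (Cst 2)) (Cst 1)))).
Definition stepf t m G := bex (m+1) (fun k => candf t m G k && (ball k (fun k' => negb (candf t m G k')) && (k mod 2 =? 1))).
Lemma den_stepE t m G env : den (stepE t m G) env = Nat.b2n (stepf (den t env) (den m env) (den G env)).
Proof.
  unfold stepE, stepf. erewrite den_exE'. rs. reflexivity.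
  intros. rs. rewrite den_candE. rs. erewrite den_allE'. rs. reflexivity.
  intros. rs. rewrite den_candE. rs. reflexivity.
Qed.

Definition GBE t m := Rec m (Cst 0) (Add (Var 1) (Mul (powE (Cst 2) (Var 0)) (stepE (lift0 (lift0 t)) (Var 0) (Var 1)))).
Definition GBf t m := recf m 0 (fun i r => r + 2^i * Nat.b2n (stepf t i r)).
Lemma den_GBE t m env : den (GBE t m) env = GBf (den t env) (den m env).
Proof.
  unfold GBE, GBf. cbn [den]. apply recf_ext. intros i r. rs. rewrite den_powE, den_stepE. rs. reflexivity.
Qed.

Definition CE := stepE (Var 0) (minE (Var 0)) (GBE (Var 0) (minE (Var 0))).
Definition colf a := stepf a (minf a) (GBf a (minf a)).
Lemma den_CE a : den CE [a] = Nat.b2n (colf a).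
Proof. unfold CE, colf. rewrite den_stepE, den_GBE, den_minE. reflexivity. Qed.

Lemma colf_computable : computable_coloring colf.
Proof.
  destruct (compile CE) as [c Hc]. exists (Comp c [Comp c_cons [Proj 0; Zero]]).
  intros n. eapply ev_comp1. eapply ev_comp2. apply ev_proj. constructor. apply ev_cons.
  specialize (Hc [n]). rewrite den_CE in Hc. simpl in Hc. destruct (colf n); exact Hc.
Qed.


Definition gval t m := stepf t m (GBf t m).
Lemma GBf_sum t m : GBf t m = sumf m (fun i => 2^i * Nat.b2n (gval t i)).
Proof. induction m. reflexivity. change (GBf t (S m)) with (GBf t m + 2^m * Nat.b2n (stepf t m (GBf t m))). cbn [sumf]. rewrite <- IHm. reflexivity. Qed.
Lemma GBf_bits t m m' : Nat.testbit (GBf t m) m' = (m' <? m) && gval t m'.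
Proof. rewrite GBf_sum. apply bits_spec. Qed.

Definition cand t k m := candf t m (GBf t m) k.
Lemma cand_eq t k m : cand t k m = memf (k/2) m t && negb (bex m (fun m' => memf (k/2) m' t && (Nat.b2n (gval t m') =? k mod 2))).
Proof.
  unfold cand, candf. f_equal. f_equal. apply bex_ext. intros i Hi. rewrite GBf_bits.
  assert (i <? m = true) by (apply Nat.ltb_lt; auto). rewrite H; reflexivity.
Qed.
Lemma gval_eq t m : gval t m = bex (m+1) (fun k => cand t k m && (ball k (fun k' => negb (cand t k' m)) && (k mod 2 =? 1))).
Proof. reflexivity. Qed.

Definition Acts t k m := k <= m /\ cand t k m = true /\ forall k', k' < k -> cand t k' m = false.

Lemma acts_gval t k m : Acts t k m -> gval t m = (k mod 2 =? 1).
Proof.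
  intros [H1 [H2 H3]]. rewrite gval_eq. destruct (k mod 2 =? 1) eqn:E.
  - apply bex_spec. exists k. split. lia. rewrite H2, E. simpl. rewrite andb_true_r.
    apply ball_spec. intros. rewrite H3; auto.
  - destruct (bex _ _) eqn:E2; auto. apply bex_spec in E2 as [k0 [Hk0 Hc]].
    apply andb_true_iff in Hc as [Hc1 Hc2]. apply andb_true_iff in Hc2 as [Hc2 Hc3].
    rewrite ball_spec in Hc2. destruct (lt_eq_lt_dec k0 k) as [[Hlt|Heq]|Hgt].
    + rewrite H3 in Hc1; auto.
    + subst; congruence.
    + specialize (Hc2 k Hgt). rewrite H2 in Hc2. discriminate.
Qed.

Lemma b2n_mod2 k : Nat.b2n (k mod 2 =? 1) = k mod 2.
Proof.
  pose proof (Nat.mod_upper_bound k 2). destruct (k mod 2) as [|[|]]; simpl; auto; lia.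
Qed.

Lemma acts_unique t k m1 m2 : Acts t k m1 -> Acts t k m2 -> m1 = m2.
Proof.
  intros A1 A2.
  assert (forall a b, Acts t k a -> Acts t k b -> ~ a < b).
  { intros a b Aa Ab Hab. pose proof (acts_gval _ _ _ Aa) as Hg.
    destruct Aa as [_ [Ca _]]. destruct Ab as [_ [Cb _]].
    rewrite cand_eq in Ca, Cb. apply andb_true_iff in Ca as [Ca _]. apply andb_true_iff in Cb as [_ Cb].
    rewrite negb_true_iff in Cb. assert (bex b (fun m' => memf (k / 2) m' t && (Nat.b2n (gval t m') =? k mod 2)) = true).
    { apply bex_spec. exists a. split; auto. rewrite Ca, Hg, b2n_mod2, Nat.eqb_refl. auto. }
    congruence. }
  destruct (lt_eq_lt_dec m1 m2) as [[H1|H1]|H1]; auto; exfalso. exact (H _ _ A1 A2 H1). exact (H _ _ A2 A1 H1).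
Qed.

Lemma cand_acts t k m : k <= m -> cand t k m = true -> exists k', k' <= k /\ Acts t k' m.
Proof.
  revert k. induction k as [k IH] using (well_founded_induction lt_wf). intros Hk Hc.
  destruct (classic (exists k', k' < k /\ cand t k' m = true)) as [[k' [H1 H2]]|Hn].
  - destruct (IH k' H1) as [k'' [H3 H4]]; auto. lia. exists k''; split; auto; lia.
  - exists k. split; auto. split; auto. split; auto. intros k' Hk'. destruct (cand t k' m) eqn:E; auto.
    exfalso; apply Hn; eauto.
Qed.

Lemma memf_mono e m t : memf e m t = true -> memf e m (S t) = true.
Proof.
  unfold memf. intros H. eapply bex_mono; eauto.
  intros x Hx. apply andb_true_iff in Hx as [Hx1 Hx2]. rewrite Hx1; simpl.
  unfold Hf in *. eapply bex_mono; eauto. intros y Hy. apply memB_mono. exact Hy.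
Qed.
Lemma memf_mono_le e m t t' : t <= t' -> memf e m t = true -> memf e m t' = true.
Proof. induction 1; auto. intros; apply memf_mono; auto. Qed.

Lemma gval_local M t1 t2 : (forall e m', e <= M -> m' <= M -> memf e m' t1 = memf e m' t2) ->
  forall m, m <= M -> gval t1 m = gval t2 m.
Proof.
  intros HM m. induction m as [m IH] using (well_founded_induction lt_wf). intros Hm.
  assert (Hc : forall k, k <= m -> cand t1 k m = cand t2 k m).
  { intros k Hk. assert (Hk2 : k / 2 <= M) by (apply Nat.le_trans with k; [apply Nat.Div0.div_le_upper_bound; lia|lia]).
    rewrite !cand_eq. rewrite HM by lia.
    f_equal. f_equal. apply bex_ext. intros i Hi. rewrite HM by lia. rewrite IH by lia. reflexivity. }
  rewrite !gval_eq. apply bex_ext. intros k Hk. rewrite Hc by lia. f_equal. f_equal.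
  apply ball_ext. intros k' Hk'. rewrite Hc by lia. auto.
Qed.

Lemma memf_stable e m : exists T, forall t, T <= t -> memf e m t = memf e m T.
Proof.
  destruct (classic (exists t, memf e m t = true)) as [[T HT]|Hn].
  - exists T. intros t Ht. rewrite HT. eapply memf_mono_le; eauto.
  - exists 0. intros t _. destruct (memf e m t) eqn:E. exfalso; eauto. destruct (memf e m 0) eqn:E2; auto.
Qed.

Lemma all_stable M : exists T, forall t, T <= t -> forall e m', e <= M -> m' <= M -> memf e m' t = memf e m' T.
Proof.
  assert (Hst : forall e m B B', B <= B' -> (forall t, B <= t -> memf e m t = memf e m B) ->
     (forall t, B' <= t -> memf e m t = memf e m B')).
  { intros e m B B' HB H t Ht. rewrite (H t), (H B') by lia. auto. }
  destruct (fin_bound (fun e B => forall m', m' < S M -> forall t, B <= t -> memf e m' t = memf e m' B) (S M)) as [T HT].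
  - intros e B B' HB H m' Hm'. eapply Hst; eauto.
  - intros e He. apply fin_bound.
    + intros m' B B' HB H. eapply Hst; eauto.
    + intros m' _. apply memf_stable.
  - exists T. intros t Ht e m' He Hm'. apply HT; lia.
Qed.

Lemma gval_stable M : exists T, forall t, T <= t -> forall m, m <= M -> gval t m = gval T m.
Proof.
  destruct (all_stable M) as [T HT]. exists T. intros t Ht m Hm.
  apply (gval_local M). intros; apply HT; auto. auto.
Qed.


Lemma nodup_map_seq (g : nat -> nat) k len :
  (forall i j, k <= i < k + len -> k <= j < k + len -> g i = g j -> i = j) -> NoDup (map g (seq k len)).
Proof.
  revert k; induction len; intros k Hinj; simpl. constructor.
  constructor.
  - intros Hin. apply in_map_iff in Hin as [i [Hi1 Hi2]]. apply in_seq in Hi2.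
    assert (i = k) by (apply Hinj; lia). lia.
  - apply IHlen. intros; apply Hinj; lia.
Qed.

Lemma pigeon n m (g : nat -> nat) : (forall i, i < n -> g i < m) ->
  (forall i j, i < n -> j < n -> g i = g j -> i = j) -> n <= m.
Proof.
  intros Hr Hi.
  assert (NoDup (map g (seq 0 n))) by (apply nodup_map_seq; intros; apply Hi; lia).
  assert (incl (map g (seq 0 n)) (seq 0 m)).
  { intros x Hx. apply in_map_iff in Hx as [i [<- Hi2]]. apply in_seq in Hi2. apply in_seq. specialize (Hr i). lia. }
  pose proof (NoDup_incl_length H H0). rewrite length_map, !length_seq in H1. auto.
Qed.

Lemma pigeon_rel n m (R : nat -> nat -> Prop) : (forall i, i < n -> exists k, k < m /\ R i k) ->
  (forall i j k, i < n -> j < n -> R i k -> R j k -> i = j) -> n <= m.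
Proof.
  intros H1 H2.
  assert (H3 : forall i, exists k, i < n -> k < m /\ R i k).
  { intros i. destruct (lt_dec i n). destruct (H1 i l) as [k Hk]. exists k; auto. exists 0; intros; lia. }
  set (g := fun i => proj1_sig (constructive_indefinite_description _ (H3 i))).
  assert (Hg : forall i, i < n -> g i < m /\ R i (g i)).
  { intros i Hi. unfold g. destruct (constructive_indefinite_description _ _) as [k Hk]. simpl; auto. }
  apply (pigeon n m g). intros i Hi; apply Hg; auto.
  intros i j Hi Hj E. apply (H2 i j (g i)); auto. apply Hg; auto. rewrite E. apply Hg; auto.
Qed.

Lemma testbit_le a k : Nat.testbit a k = true -> 2 ^ k <= a.
Proof.
  intros H. destruct (le_lt_dec (2^k) a); auto.
  rewrite Nat.testbit_odd, Nat.shiftr_div_pow2, Nat.div_small in H; auto. discriminate.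
Qed.

Lemma least_ex (P : nat -> bool) n : P n = true -> exists m, P m = true /\ forall j, j < m -> P j = false.
Proof.
  revert n. induction n as [n IH] using (well_founded_induction lt_wf). intros Hn.
  destruct (classic (exists j, j < n /\ P j = true)) as [[j [Hj1 Hj2]]|Hno].
  - apply (IH j Hj1 Hj2).
  - exists n; split; auto. intros j Hj. destruct (P j) eqn:E; auto. exfalso; eauto.
Qed.

Lemma minf_char x m : Nat.testbit x m = true -> (forall j, j < m -> Nat.testbit x j = false) -> minf x = m.
Proof.
  intros H1 H2. unfold minf.
  assert (m < x). { pose proof (testbit_le _ _ H1). pose proof (Nat.pow_gt_lin_r 2 m). lia. }
  rewrite (sumf_ext _ _ (fun i => if i <? m then 1 else 0)). apply sumf_ind_lt; lia.
  intros k Hk. destruct (k <? m) eqn:E.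
  - apply Nat.ltb_lt in E. replace (ball _ _) with true; auto. symmetry. apply ball_spec. intros j Hj.
    rewrite H2 by lia. auto.
  - apply Nat.ltb_ge in E. replace (ball _ _) with false; auto. symmetry. destruct (ball _ _) eqn:E2; auto.
    rewrite ball_spec in E2. specialize (E2 m). rewrite H1 in E2. simpl in E2. discriminate E2. lia.
Qed.

Lemma minf_spec x : x <> 0 -> Nat.testbit x (minf x) = true /\ forall j, j < minf x -> Nat.testbit x j = false.
Proof.
  intros Hx. destruct (least_ex (Nat.testbit x) (Nat.log2 x)) as [m [H1 H2]].
  apply Nat.bit_log2; auto. rewrite (minf_char x m); auto.
Qed.

Lemma testbit_nz x k : Nat.testbit x k = true -> x <> 0.
Proof. intros H ->. rewrite Nat.bits_0 in H. discriminate. Qed.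

Lemma minf_lor x y : x <> 0 -> y <> 0 -> minf x < minf y -> minf (Nat.lor x y) = minf x.
Proof.
  intros Hx Hy Hlt. destruct (minf_spec x Hx) as [X1 X2]. destruct (minf_spec y Hy) as [Y1 Y2].
  apply minf_char. rewrite Nat.lor_spec, X1; auto.
  intros j Hj. rewrite Nat.lor_spec, X2, Y2; auto. lia.
Qed.


Lemma FAM Sx : inf_pairwise_disjoint Sx -> forall B, exists y, Sx y /\ y <> 0 /\ B <= minf y.
Proof.
  intros [f [HS [Hd Hdisj]]] B. apply NNPP. intros Hno.
  assert (Hlt : forall y, Sx y -> y <> 0 -> minf y < B).
  { intros y Hy Hy0. destruct (le_lt_dec B (minf y)); auto. exfalso; apply Hno; eauto. }
  set (g := fun i => if f i =? 0 then B else minf (f i)).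
  assert (S (S B) <= S B); [|lia].
  apply (pigeon _ _ g).
  - intros i Hi. unfold g. destruct (f i =? 0) eqn:E. lia. apply Nat.eqb_neq in E. specialize (Hlt _ (HS i) E). lia.
  - intros i j Hi Hj E. destruct (Nat.eq_dec i j); auto. exfalso. unfold g in E.
    destruct (f i =? 0) eqn:Ei, (f j =? 0) eqn:Ej; apply Nat.eqb_eq in Ei || apply Nat.eqb_neq in Ei;
      apply Nat.eqb_eq in Ej || apply Nat.eqb_neq in Ej.
    + apply (Hd i j n). congruence.
    + specialize (Hlt _ (HS j) Ej). lia.
    + specialize (Hlt _ (HS i) Ei). lia.
    + apply (Hdisj i j n (minf (f i))). unfold fin_mem. split. apply minf_spec; auto.
      rewrite E. apply minf_spec; auto.
Qed.


Definition Me (Sx : nat -> Prop) m := exists x, Sx x /\ x <> 0 /\ minf x = m.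

Lemma memf_sound (Sx : nat -> Prop) cS (HcS : forall n, Sx n <-> exists y, eval cS [n] y) m t : memf (enc cS) m t = true -> Me Sx m.
Proof.
  unfold memf. intros H. apply bex_spec in H as [x [_ Hx]].
  apply andb_true_iff in Hx as [Hx Hh]. apply andb_true_iff in Hx as [Hx0 Hm].
  unfold Hf in Hh. apply bex_spec in Hh as [y [_ Hy]].
  exists x. split. apply HcS. exists y. apply (proj1 (sound t _ Hy)). reflexivity.
  split. unfold nz in Hx0. destruct x; simpl in *; congruence. apply Nat.eqb_eq; auto.
Qed.

Lemma memf_compl (Sx : nat -> Prop) cS (HcS : forall n, Sx n <-> exists y, eval cS [n] y) x : Sx x -> x <> 0 -> exists T, forall t, T <= t -> memf (enc cS) (minf x) t = true.
Proof.
  intros Hx Hx0. apply HcS in Hx as [y Hy]. destruct (compl_eval _ _ _ Hy) as [s0 Hs0].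
  exists (max s0 (max (S x) (S y))). intros t Ht. unfold memf. apply bex_spec. exists x. split. lia.
  rewrite Nat.eqb_refl. unfold nz. destruct x; [congruence|]. simpl.
  unfold Hf. apply bex_spec. exists y. split. lia. apply (Hs0 t). lia.
Qed.

Theorem theorem3p1 :
  exists c : nat -> bool,
    computable_coloring c /\
    forall S : nat -> Prop,
      c_e S -> inf_pairwise_disjoint S ->
      exists a b, NU S a /\ NU S b /\ c a <> c b.
Proof.
  exists colf. split. apply colf_computable.
  intros Sx [cS HcS] Hfam. apply NNPP; intros Hno.
  assert (Hm : forall a b, NU Sx a -> NU Sx b -> colf a = colf b).
  { intros a b Ha Hb. apply NNPP; intro. apply Hno; eauto. }
  pose proof (FAM Sx Hfam) as Fam.
  destruct (Fam 0) as [y0 [Hy0 [Hy00 _]]].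
  assert (NUs : forall x, Sx x -> x <> 0 -> NU Sx x).
  { intros x Hx Hx0. split; auto. exists [x]. split. intros z [<-|[]]; auto. simpl. rewrite Nat.lor_0_r; auto. }
  set (kap := colf y0).
  assert (Hk : forall a, NU Sx a -> colf a = kap) by (intros; apply Hm; auto).
  assert (LemA : forall m, Me Sx m -> forall T, exists t, T <= t /\ gval t m = kap).
  { intros m [x [Hx [Hx0 <-]]] T. destruct (Fam (max (S (minf x)) T)) as [y [Hy [Hyy Hyb]]].
    exists (Nat.lor x y). split.
    - destruct (minf_spec y Hyy) as [Y1 _]. assert (Nat.testbit (Nat.lor x y) (minf y) = true).
      { rewrite Nat.lor_spec, Y1. apply orb_true_r. }
      pose proof (testbit_le _ _ H). pose proof (Nat.pow_gt_lin_r 2 (minf y)). lia.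
    - rewrite <- (minf_lor x y) by (auto; lia). unfold gval. fold (colf (Nat.lor x y)).
      apply Hk. split.
      + destruct (minf_spec x Hx0) as [X1 _]. apply (testbit_nz _ (minf x)). rewrite Nat.lor_spec, X1; auto.
      + exists [x; y]. split. intros z [<-|[<-|[]]]; auto. simpl. rewrite Nat.lor_0_r; auto. }
  assert (LemB : forall M, exists T, forall t, T <= t -> forall m, m <= M -> Me Sx m -> gval t m = kap).
  { intros M. destruct (gval_stable M) as [T HT]. exists T. intros t Ht m HmM Hme.
    destruct (LemA m Hme T) as [t' [Ht' Hg]]. rewrite HT by auto. rewrite <- (HT t') by auto. auto. }
  set (e := enc cS). set (b := negb kap). set (k0 := e * 2 + Nat.b2n b).
  assert (Hk0a : k0 / 2 = e).
  { unfold k0. rewrite Nat.div_add_l by lia. destruct b; simpl; lia. }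
  assert (Hk0b : k0 mod 2 = Nat.b2n b).
  { unfold k0. rewrite Nat.add_comm, Nat.Div0.mod_add. destruct b; reflexivity. }
  assert (FamM : forall B, exists m, Me Sx m /\ B <= m).
  { intros B. destruct (Fam B) as [y [Hy [Hyy HB]]]. exists (minf y); split; auto. exists y; auto. }
  set (pick := fun B => proj1_sig (constructive_indefinite_description _ (FamM B))).
  assert (Hpick : forall B, Me Sx (pick B) /\ B <= pick B).
  { intros B. unfold pick. destruct (constructive_indefinite_description _ _) as [m Hm']. auto. }
  set (h := fix h i := match i with 0 => pick k0 | S i => pick (S (h i)) end).
  assert (Hh1 : forall i, Me Sx (h i) /\ k0 <= h i).
  { induction i; simpl. apply Hpick. split. apply Hpick. pose proof (Hpick (S (h i))). lia. }
  assert (Hh2 : forall i j, i < j -> h i < h j).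
  { intros i j Hij. induction Hij. simpl. apply Hpick. simpl. pose proof (Hpick (S (h m))). lia. }
  assert (Hh3 : forall i, i <= k0 -> h i <= h k0).
  { intros i Hi. destruct (Nat.eq_dec i k0). subst; lia. pose proof (Hh2 i k0). lia. }
  destruct (LemB (h k0)) as [T1 HT1].
  destruct (fin_bound (fun i B => forall t, B <= t -> memf e (h i) t = true) (S k0)) as [T2 HT2].
  { intros i B B' HB H t Ht. apply H. lia. }
  { intros i Hi. destruct (Hh1 i) as [[x [Hx [Hx0 Hxm]]] _]. rewrite <- Hxm. apply (memf_compl Sx cS HcS); auto. }
  set (t := max T1 T2).
  assert (Hcand : forall i, i < S k0 -> cand t k0 (h i) = true).
  { intros i Hi. rewrite cand_eq, Hk0a, Hk0b. rewrite (HT2 i Hi t) by lia. simpl.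
    apply negb_true_iff. destruct (bex _ _) eqn:E; auto. apply bex_spec in E as [m' [Hm' Hc]].
    apply andb_true_iff in Hc as [Hc1 Hc2]. apply (memf_sound Sx cS HcS) in Hc1.
    rewrite (HT1 t) in Hc2; auto. unfold b in Hc2. destruct kap; discriminate. lia.
    pose proof (Hh3 i). lia. }
  assert (S k0 <= k0); [|lia].
  apply (pigeon_rel (S k0) k0 (fun i k => Acts t k (h i))).
  - intros i Hi. destruct (cand_acts t k0 (h i)) as [k' [Hk' Ha]]. apply Hh1. apply Hcand; auto.
    exists k'. split; auto. destruct (Nat.eq_dec k' k0); [|lia]. subst k'. exfalso.
    apply acts_gval in Ha. rewrite (HT1 t) in Ha; try lia. rewrite Hk0b in Ha. unfold b in Ha.
    destruct kap; discriminate. pose proof (Hh3 i); lia. apply Hh1.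
  - intros i j k Hi Hj A1 A2. pose proof (acts_unique _ _ _ _ A1 A2) as Heq.
    destruct (lt_eq_lt_dec i j) as [[Hl|Hl]|Hl]; auto; apply Hh2 in Hl; lia.
Qed.
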